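(* Let $(H,\prec,\cdot,\succ,\Delta)$ be a $q$-tridendriform bialgebra and let $M_{1n}$ be the brace operations associated to the dendriform algebra $(H,\prec,q\,\cdot+\succ)$. If $x,y,z_1,\dots,z_n\in H$ are primitive, then $M_{1n}(x;z_1,\dots,z_n)$ and $x\cdot y$ are primitive. Consequently the subspace $\mathrm{Prim}(H)$ of primitive elements is a sub-$GV_q$-algebra of $(H,M_{1n},\cdot)$.
   Context: $q$-tridendriform algebra: a vector space $H$ with bilinear $\prec,\cdot,\succ$ satisfying (1) $(a\prec b)\prec c=a\prec(b\prec c+b\succ c+q\,b\cdot c)$; (2) $(a\succ b)\prec c=a\succ(b\prec c)$; (3) $(a\prec b+a\succ b+q\,a\cdot b)\succ c=a\succ(b\succ c)$; (4) $(a\cdot b)\cdot c=a\cdot(b\cdot c)$; (5) $(a\succ b)\cdot c=a\succ(b\cdot c)$; (6) $(a\prec b)\cdot c=a\cdot(b\succ c)$; (7) $(a\cdot b)\prec c=a\cdot(b\prec c)$. Put $*:=\prec+q\,\cdot+\succ$. Unit conventions: $H_+:=H\oplus\mathbb{K}1$, $\epsilon:H_+\to\mathbb{K}$ the projection onto $\mathbb{K}$; for $x\in H$: $x\succ1=x\cdot1=1\cdot x=1\prec x=0$, $1\succ x=x=x\prec1$, $1*x=x*1=x$; moreover in tensor expressions one sets $(x*y)\otimes(1\succ1):=(x\succ y)\otimes1$, $(x*y)\otimes(1\cdot1):=(x\cdot y)\otimes1$, $(x*y)\otimes(1\prec1):=(x\prec y)\otimes1$. A $q$-tridendriform bialgebra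 is a $q$-tridendriform algebra $H$ with a linear map $\Delta:H_+\to H_+\otimes H_+$ such that $\Delta(1)=1\otimes1$, $(\epsilon\otimes\mathrm{Id})\Delta(x)=1\otimes x$, $(\mathrm{Id}\otimes\epsilon)\Delta(x)=x\otimes1$, and $\Delta(x\circ y)=\sum(x_{(1)}*y_{(1)})\otimes(x_{(2)}\circ y_{(2)})$ for $\circ\in\{\succ,\cdot,\prec\}$ and $x,y\in H$, where $\Delta(x)=\sum x_{(1)}\otimes x_{(2)}$ in $H_+\otimes H_+$. An element $x\in H$ is primitive if $\Delta(x)=x\otimes1+1\otimes x$. Brace operations of the dendriform algebra $(H,\prec,\tilde\succ)$, $\tilde\succ=q\,\cdot+\succ$: $\omega_\prec(y_1,\dots,y_i)=y_1\prec(y_2\prec(\cdots\prec y_i))$, $\omega_{\tilde\succ}(y_{i+1},\dots,y_n)=((y_{i+1}\tilde\succ y_{i+2})\tilde\succ\cdots)\tilde\succ y_n$, empty $\omega=1$; $M_{10}=\mathrm{Id}$ and $M_{1n}(x;y_1,\dots,y_n)=\sum_{i=0}^n(-1)^{n-i}(\omega_\prec(y_1,\dots,y_i)\tilde\succ x)\prec\omega_{\tilde\succ}(y_{i+1},\dots,y_n)$. A $GV_q$ algebra is a brace algebra $(B,M_{1n})$ with an associative product $\cdot$ satisfying $M_{1n}(x\cdot y;z_1,\dots,z_n)=\sum_{0\le i\le j\le n}q^{j-i}M_{1i}(x;z_1,\dots,z_i)\cdot z_{i+1}\cdots z_j\cdot M_{1(n-j)}(y;z_{j+1},\dots,z_n)$;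 $(H,M_{1n},\cdot)$ is a $GV_q$ algebra. *)

(* Defs.v *)
From HB Require Import structures.
From mathcomp Require Import all_boot all_order all_algebra.
Set Implicit Arguments. Unset Strict Implicit. Unset Printing Implicit Defensive.
Import GRing.Theory.
Local Open Scope ring_scope.

Section QTridendriform.
Variables (K : fieldType) (H : lmodType K) (q : K).
Variables (prec dot succ : H -> H -> H).

Definition qstar (a b : H) : H := prec a b + q *: dot a b + succ a b.
Definition tsucc (a b : H) : H := q *: dot a b + succ a b.

Definition bilinear_op (op : H -> H -> H) : Prop :=
  (forall a, linear (op a)) /\ (forall b, linear (op^~ b)).

Record qtridendriform : Prop := QTri {
  qt_bil_prec : bilinear_op prec;
  qt_bil_dot  : bilinear_op dot;
  qt_bil_succ : bilinear_op succ;
  qt_ax1 : forall a b c, prec (prec a b) c = prec a (prec b c + succ b c + q *: dot b c);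
  qt_ax2 : forall a b c, prec (succ a b) c = succ a (prec b c);
  qt_ax3 : forall a b c, succ (prec a b + succ a b + q *: dot a b) c = succ a (succ b c);
  qt_ax4 : forall a b c, dot (dot a b) c = dot a (dot b c);
  qt_ax5 : forall a b c, dot (succ a b) c = succ a (dot b c);
  qt_ax6 : forall a b c, dot (prec a b) c = dot a (succ b c);
  qt_ax7 : forall a b c, prec (dot a b) c = dot a (prec b c)
}.

(* Augmentation H_+ = K 1 (+) H ; an element (c, x) stands for c 1 + x. *)
Definition Hp : Type := (K^o * H)%type.
Definition unit1 : Hp := (1 : K^o, 0).
Definition inj (x : H) : Hp := (0 : K^o, x).
Definition eps (a : Hp) : K := a.1.

(* Extensions of the products to H_+ following the unit conventions:
   1 * x = x * 1 = x, 1 > x = x, x > 1 = 0, x < 1 = x, 1 < x = 0,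
   x . 1 = 1 . x = 0.  The undefined values 1 o 1 are never used
   (they only occur through the convention on tensors, handled below). *)
Definition starp (a b : Hp) : Hp :=
  ((a.1 : K) * b.1 : K^o, (a.1 : K) *: b.2 + (b.1 : K) *: a.2 + qstar a.2 b.2).
Definition succp (a b : Hp) : H := succ a.2 b.2 + (a.1 : K) *: b.2.
Definition dotp  (a b : Hp) : H := dot a.2 b.2.
Definition precp (a b : Hp) : H := prec a.2 b.2 + (b.1 : K) *: a.2.

(* Elements of H_+ (x) H_+ are represented by finite formal sums of simple
   tensors; equality in the tensor product is given by its universal
   property: two formal sums are equal iff every bilinear map agrees. *)
Definition tens := seq (Hp * Hp).

Definition tens_eq (s t : tens) : Prop :=
  forall (U : lmodType K) (f : Hp -> Hp -> U),
    (forall v, linear (f v)) -> (forall w, linear (f^~ w)) ->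
    \sum_(p <- s) f p.1 p.2 = \sum_(p <- t) f p.1 p.2.

Definition tens_scale (c : K) (s : tens) : tens := [seq (c *: p.1, p.2) | p <- s].

(* Contribution of simple tensors (a1 (x) a2), (b1 (x) b2) to
   Delta(x o y) = sum (x(1) * y(1)) (x) (x(2) o y(2)), with the convention
   (x * y) (x) (1 o 1) := (x o y) (x) 1. *)
Definition coprod_term (opp : Hp -> Hp -> H) (u v : Hp * Hp) : tens :=
  [:: (starp u.1 v.1, inj (opp u.2 v.2));
      (((u.2.1 : K) * (v.2.1 : K)) *: inj (opp u.1 v.1), unit1)].

Definition coprod (opp : Hp -> Hp -> H) (s t : tens) : tens :=
  flatten [seq coprod_term opp u v | u <- s, v <- t].

Record qtri_bialgebra (Delta : Hp -> tens) : Prop := QTriBialg {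
  qb_linear : forall (c : K) (u v : Hp),
      tens_eq (Delta (c *: u + v)) (tens_scale c (Delta u) ++ Delta v);
  qb_unit : tens_eq (Delta unit1) [:: (unit1, unit1)];
  qb_counit_l : forall x : H,
      \sum_(p <- Delta (inj x)) eps p.1 *: p.2 = inj x;
  qb_counit_r : forall x : H,
      \sum_(p <- Delta (inj x)) eps p.2 *: p.1 = inj x;
  qb_succ : forall x y : H,
      tens_eq (Delta (inj (succ x y))) (coprod succp (Delta (inj x)) (Delta (inj y)));
  qb_dot : forall x y : H,
      tens_eq (Delta (inj (dot x y))) (coprod dotp (Delta (inj x)) (Delta (inj y)));
  qb_prec : forall x y : H,
      tens_eq (Delta (inj (prec x y))) (coprod precp (Delta (inj x)) (Delta (inj y)))
}.

Definition primitive (Delta : Hp -> tens) (x : H) : Prop :=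
  tens_eq (Delta (inj x)) [:: (inj x, unit1); (unit1, inj x)].

Fixpoint wprec (y : H) (ys : seq H) : H :=
  if ys is z :: zs then prec y (wprec z zs) else y.
Definition wsucc (y : H) (ys : seq H) : H := foldl tsucc y ys.

(* (omega_<(y1..yi) ~> x) < omega_~>(y(i+1)..yn), with empty omega = 1 *)
Definition brace_term (x : H) (ys : seq H) (i : nat) : H :=
  let l := take i ys in
  let r := drop i ys in
  let left := if l is y :: l' then tsucc (wprec y l') x else x in
  if r is z :: r' then prec left (wsucc z r') else left.

Definition M1n (x : H) (ys : seq H) : H :=
  \sum_(i < (size ys).+1) (-1) ^+ (size ys - i) *: brace_term x ys i.

End QTridendriform.

(* Main.v *)
Require Import Defs.
From HB Require Import structures.
From mathcomp Require Import all_boot all_order all_algebra.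
From Stdlib Require Import Lia.
Import GRing.Theory.
Set Implicit Arguments. Unset Strict Implicit. Unset Printing Implicit Defensive.
Local Open Scope ring_scope.

Section Gen.
Variable K : fieldType.

Lemma linD (U V : lmodType K) (f : U -> V) : linear f -> forall u v, f (u + v) = f u + f v.
Proof. by move=> hf u v; have := hf 1 u v; rewrite !scale1r. Qed.
Lemma lin0 (U V : lmodType K) (f : U -> V) : linear f -> f 0 = 0.
Proof. move=> hf; have h := linD hf 0 0; rewrite addr0 in h.
by apply: (addrI (f 0)); rewrite addr0 -h. Qed.
Lemma linZ (U V : lmodType K) (f : U -> V) : linear f -> forall a u, f (a *: u) = a *: f u.
Proof. by move=> hf a u; rewrite -[a *: u]addr0 hf (lin0 hf) addr0. Qed.
Lemma linN (U V : lmodType K) (f : U -> V) : linear f -> forall u, f (- u) = - f u.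
Proof. by move=> hf u; rewrite -scaleN1r linZ // scaleN1r. Qed.
Lemma lin_sum (U V : lmodType K) (f : U -> V) (I : Type) (r : seq I) (F : I -> U) :
  linear f -> f (\sum_(i <- r) F i) = \sum_(i <- r) f (F i).
Proof.
move=> hf; elim: r => [|x r IH]; first by rewrite !big_nil lin0.
by rewrite !big_cons linD // IH.
Qed.

Definition bil (A B C : lmodType K) (f : A -> B -> C) :=
  (forall a, linear (f a)) /\ (forall b, linear (f^~ b)).


Section BilLemmas.
Variables (A B C : lmodType K) (f : A -> B -> C).
Hypothesis hf : bil f.
Lemma bl0 b : f 0 b = 0. Proof. exact: (lin0 (hf.2 b)). Qed.
Lemma br0 a : f a 0 = 0. Proof. exact: (lin0 (hf.1 a)). Qed.
Lemma blD a a' b : f (a + a') b = f a b + f a' b. Proof. exact: (linD (hf.2 b)). Qed.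
Lemma brD a b b' : f a (b + b') = f a b + f a b'. Proof. exact: (linD (hf.1 a)). Qed.
Lemma blZ c a b : f (c *: a) b = c *: f a b. Proof. exact: (linZ (hf.2 b)). Qed.
Lemma brZ c a b : f a (c *: b) = c *: f a b. Proof. exact: (linZ (hf.1 a)). Qed.
Lemma blN a b : f (- a) b = - f a b. Proof. exact: (linN (hf.2 b)). Qed.
Lemma brN a b : f a (- b) = - f a b. Proof. exact: (linN (hf.1 a)). Qed.
Lemma bl_sum I (r : seq I) (F : I -> A) b : f (\sum_(i <- r) F i) b = \sum_(i <- r) f (F i) b.
Proof. exact: (lin_sum _ _ (hf.2 b)). Qed.
Lemma br_sum I (r : seq I) (F : I -> B) a : f a (\sum_(i <- r) F i) = \sum_(i <- r) f a (F i).
Proof. exact: (lin_sum _ _ (hf.1 a)). Qed.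
End BilLemmas.

Section Comb.
Variables (A B C D : lmodType K).
Lemma bil_add (f g : A -> B -> C) : bil f -> bil g -> bil (fun a b => f a b + g a b).
Proof.
move=> [f1 f2] [g1 g2]; split=> [a|b] c x y /=.
  by rewrite f1 g1 scalerDr addrACA.
by rewrite f2 g2 scalerDr addrACA.
Qed.
Lemma bil_scale (c0 : K) (f : A -> B -> C) : bil f -> bil (fun a b => c0 *: f a b).
Proof.
move=> [f1 f2]; split=> [a|b] c x y /=.
  by rewrite f1 scalerDr !scalerA mulrC.
by rewrite f2 scalerDr !scalerA mulrC.
Qed.
Lemma bil_compl (h : D -> A) (f : A -> B -> C) : linear h -> bil f -> bil (fun a b => f (h a) b).
Proof.
move=> hh [f1 f2]; split=> [a|b] c x y /=; first by rewrite f1.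
by rewrite hh f2.
Qed.
Lemma bil_compr (h : D -> B) (f : A -> B -> C) : linear h -> bil f -> bil (fun a b => f a (h b)).
Proof.
move=> hh [f1 f2]; split=> [a|b] c x y /=; first by rewrite hh f1.
by rewrite f2.
Qed.
Lemma bil_post (h : C -> D) (f : A -> B -> C) : linear h -> bil f -> bil (fun a b => h (f a b)).
Proof.
move=> hh [f1 f2]; split=> [a|b] c x y /=; first by rewrite f1 hh.
by rewrite f2 hh.
Qed.
Lemma bil_swap (f : A -> B -> C) : bil f -> bil (fun b a => f a b).
Proof. by move=> [f1 f2]; split. Qed.
Lemma bil_pair (f : A -> B -> C) (g : A -> B -> D) : bil f -> bil g ->
  bil (fun a b => (f a b, g a b) : (C * D)%type).
Proof.
move=> [f1 f2] [g1 g2]; split=> [a|b] c x y /=; by rewrite ?f1 ?g1 ?f2 ?g2.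
Qed.
End Comb.

Lemma bil_sum (A B C : lmodType K) (I : Type) (r : seq I) (F : I -> A -> B -> C) :
  (forall i, bil (F i)) -> bil (fun a b => \sum_(i <- r) F i a b).
Proof.
move=> hF; elim: r => [|i r [IH1 IH2]].
  by split=> [a|b] c x y; rewrite !big_nil scaler0 addr0.
split=> [a|b] c x y; rewrite !big_cons.
  by rewrite IH1 ((hF i).1 a) scalerDr addrACA.
by rewrite IH2 ((hF i).2 b) scalerDr addrACA.
Qed.

Lemma acl (V : zmodType) (X Y Z : V) : Z + Y = X + Y + Z - X.
Proof. by rewrite [X + Y]addrC [Y + X + Z]addrAC addrK addrC. Qed.

Lemma ac3 (V : zmodType) (x y z : V) : x + y + z = y + z + x.
Proof. by rewrite -addrA addrC. Qed.

Lemma scalerC (V : lmodType K) (a b : K) (v : V) : a *: (b *: v) = b *: (a *: v).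
Proof. by rewrite !scalerA mulrC. Qed.

Lemma bil_scalev (V : lmodType K) : bil (fun (a : K^o) (v : V) => a *: v).
Proof.
split=> [a|b] c x y /=; first by rewrite scalerDr !scalerA mulrC.
by rewrite scalerDl scalerA.
Qed.
Lemma bil_mul : bil (fun (a b : K^o) => (a * b : K^o)).
Proof.
split=> [a|b] c x y /=; rewrite /GRing.scale /=.
  by rewrite mulrDr mulrCA.
by rewrite mulrDl mulrA.
Qed.

End Gen.

Section Main.
Variables (K : fieldType) (H : lmodType K) (q : K) (prec dot succ : H -> H -> H)
  (Delta : Hp H -> tens H).
Hypothesis HT : qtridendriform q prec dot succ.
Hypothesis HB : qtri_bialgebra q prec dot succ Delta.

Local Notation HP := (Hp H).
Local Notation one := (unit1 H).
Local Notation starp := (starp q prec dot succ).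
Local Notation coprod := (coprod q prec dot succ).

Definition tsuccp (a b : HP) : H := q *: dotp dot a b + succp succ a b.

Lemma bprec : bil prec. Proof. exact: qt_bil_prec HT. Qed.
Lemma bdot : bil dot. Proof. exact: qt_bil_dot HT. Qed.
Lemma bsucc : bil succ. Proof. exact: qt_bil_succ HT. Qed.

Lemma lin_fst : linear (fun a : HP => a.1). Proof. by []. Qed.
Lemma lin_snd : linear (fun a : HP => a.2). Proof. by []. Qed.
Lemma lin_inj : linear (@inj K H).
Proof. move=> c x y; rewrite /inj; apply: (congr2 pair) => /=; last by [].
by rewrite /GRing.scale /= mulr0 addr0. Qed.
Lemma inj0 : inj (0 : H) = 0. Proof. by []. Qed.

Lemma bqstar : bil (qstar q prec dot succ).
Proof.
rewrite /qstar; apply: bil_add; first apply: bil_add.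
- exact: bprec.
- exact: bil_scale bdot.
- exact: bsucc.
Qed.

Lemma bil_lift (f : H -> H -> H) : bil f -> bil (fun a b : HP => f a.2 b.2).
Proof.
move=> hf; apply: (bil_compl (f := fun (x : H) (b : HP) => f x b.2) lin_snd).
exact: (bil_compr (f := f) lin_snd).
Qed.

Lemma bsc12 : bil (fun a b : HP => a.1 *: b.2).
Proof.
split=> [a|b] c x y /=; first by rewrite scalerDr !scalerA mulrC.
by rewrite scalerDl scalerA.
Qed.
Lemma bsc21 : bil (fun a b : HP => b.1 *: a.2).
Proof. exact: (bil_swap bsc12). Qed.

Lemma bprecp : bil (precp prec).
Proof.
rewrite /precp; apply: bil_add; first exact: bil_lift bprec.
exact: bsc21.
Qed.
Lemma bsuccp : bil (succp succ).
Proof.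
rewrite /succp; apply: bil_add; first exact: bil_lift bsucc.
exact: bsc12.
Qed.
Lemma bdotp : bil (dotp dot).
Proof. exact: bil_lift bdot. Qed.
Lemma btsuccp : bil tsuccp.
Proof. apply: bil_add; [exact: bil_scale bdotp | exact: bsuccp]. Qed.

Lemma bstarp : bil starp.
Proof.
rewrite /Defs.starp.
apply: (bil_pair (f := fun a b : HP => (a.1 * b.1 : K^o))
   (g := fun a b : HP => a.1 *: b.2 + b.1 *: a.2 + qstar q prec dot succ a.2 b.2)).
  split=> [a|b] c x y /=; rewrite /GRing.scale /=.
    by rewrite mulrDr mulrCA.
  by rewrite mulrDl mulrA.
apply: bil_add; first apply: bil_add.
- exact: bsc12.
- exact: bsc21.
- exact: bil_lift bqstar.
Qed.

Definition Phi (U : lmodType K) (f : HP -> HP -> U) (s : tens H) : U :=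
  \sum_(p <- s) f p.1 p.2.

Lemma teqP (s t : tens H) : tens_eq s t ->
  forall (U : lmodType K) (f : HP -> HP -> U), bil f -> Phi f s = Phi f t.
Proof. by move=> h U f [f1 f2]; apply: h. Qed.

Lemma teqI (s t : tens H) :
  (forall (U : lmodType K) (f : HP -> HP -> U), bil f -> Phi f s = Phi f t) ->
  tens_eq s t.
Proof. by move=> h U f f1 f2; apply: (h U f); split. Qed.

Lemma Phi_cat (U : lmodType K) (f : HP -> HP -> U) s t : Phi f (s ++ t) = Phi f s + Phi f t.
Proof. by rewrite /Phi big_cat. Qed.
Lemma Phi_cons (U : lmodType K) (f : HP -> HP -> U) p s : Phi f (p :: s) = f p.1 p.2 + Phi f s.
Proof. by rewrite /Phi big_cons. Qed.
Lemma Phi_nil (U : lmodType K) (f : HP -> HP -> U) : Phi f [::] = 0.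
Proof. by rewrite /Phi big_nil. Qed.
Lemma Phi_scale (U : lmodType K) (f : HP -> HP -> U) c s : bil f -> Phi f (tens_scale c s) = c *: Phi f s.
Proof.
move=> hf; rewrite /Phi /tens_scale big_map scaler_sumr.
by apply: eq_bigr => p _; rewrite (blZ hf).
Qed.

Section WithF.
Variables (U : lmodType K) (f : HP -> HP -> U).
Hypothesis hf : bil f.

Lemma PhiD_lin : linear (fun u => Phi f (Delta u)).
Proof.
move=> c u v; rewrite (teqP (qb_linear HB c u v) hf).
by rewrite Phi_cat Phi_scale.
Qed.

Lemma PhiD_unit : Phi f (Delta one) = f one one.
Proof. by rewrite (teqP (qb_unit HB) hf) Phi_cons Phi_nil addr0. Qed.

Lemma PhiD_prim x : primitive Delta x -> Phi f (Delta (inj x)) = f (inj x) one + f one (inj x).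
Proof. by move=> hx; rewrite (teqP hx hf) !Phi_cons Phi_nil addr0. Qed.

End WithF.

Definition G (opp : HP -> HP -> H) (U : lmodType K) (f : HP -> HP -> U) (u v : HP * HP) : U :=
  f (starp u.1 v.1) (inj (opp u.2 v.2)) +
  f (((u.2.1 : K) * (v.2.1 : K)) *: inj (opp u.1 v.1)) one.

Lemma Phi_coprod opp (U : lmodType K) (f : HP -> HP -> U) s t :
  Phi f (coprod opp s t) = \sum_(u <- s) \sum_(v <- t) G opp f u v.
Proof.
rewrite /Phi /Defs.coprod big_flatten /= big_allpairs_dep.
apply: eq_bigr => u _; apply: eq_bigr => v _.
by rewrite /coprod_term !big_cons big_nil addr0.
Qed.

Lemma fstD (c : K) (x y : HP) : (c *: x + y).1 = c * x.1 + y.1 :> K.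
Proof. by []. Qed.
Lemma scK (c : K) (a : K^o) : c *: a = c * a :> K.
Proof. by []. Qed.
Lemma sndD (c : K) (x y : HP) : (c *: x + y).2 = c *: x.2 + y.2.
Proof. by []. Qed.

Lemma Gbil1 opp (hop : bil opp) (U : lmodType K) (f : HP -> HP -> U) (hf : bil f) v :
  bil (fun a b => G opp f (a, b) v).
Proof.
split=> [a|b] c x y; rewrite /G /= !(blZ hf).
  rewrite (blD hop) (blZ hop) lin_inj (hf.1 _) scK mulrDl scalerDl -mulrA -scalerA.
  by rewrite scalerDr addrACA.
rewrite (blD bstarp) (blZ bstarp) (hf.2 _) (blD hop) (blZ hop) lin_inj (hf.2 one).
by rewrite !scalerDr scalerC addrACA.
Qed.

Lemma Gbil2 opp (hop : bil opp) (U : lmodType K) (f : HP -> HP -> U) (hf : bil f) u :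
  bil (fun a b => G opp f u (a, b)).
Proof.
split=> [a|b] c x y; rewrite /G /= !(blZ hf).
  rewrite (brD hop) (brZ hop) lin_inj (hf.1 _) scK mulrDr scalerDl mulrCA -scalerA.
  by rewrite scalerDr addrACA.
rewrite (brD bstarp) (brZ bstarp) (hf.2 _) (brD hop) (brZ hop) lin_inj (hf.2 one).
by rewrite !scalerDr scalerC addrACA.
Qed.

Lemma coprod_resp opp (hop : bil opp) s s' t t' :
  tens_eq s s' -> tens_eq t t' -> tens_eq (coprod opp s t) (coprod opp s' t').
Proof.
move=> hs ht; apply: teqI => U f hf; rewrite !Phi_coprod.
transitivity (\sum_(u <- s') \sum_(v <- t) G opp f u v).
  have := teqP hs (@bil_sum _ _ _ _ _ t (fun v a b => G opp f (a, b) v) (fun v => Gbil1 hop hf v)).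
  rewrite /Phi => e.
  transitivity (\sum_(p <- s) \sum_(v <- t) G opp f (p.1, p.2) v).
    by apply: eq_bigr => -[a b].
  rewrite e; by apply: eq_bigr => -[a b].
rewrite exchange_big [RHS]exchange_big.
have := teqP ht (@bil_sum _ _ _ _ _ s' (fun u a b => G opp f u (a, b)) (fun u => Gbil2 hop hf u)).
rewrite /Phi => e.
transitivity (\sum_(p <- t) \sum_(u <- s') G opp f u (p.1, p.2)).
  by apply: eq_bigr => -[a b].
rewrite e; by apply: eq_bigr => -[a b].
Qed.

Lemma Hp_decomp (a : HP) : a = a.1 *: one + inj a.2.
Proof.
case: a => a1 a2; apply: (congr2 pair) => /=.
  by rewrite scK mulr1 addr0.
by rewrite scaler0 add0r.
Qed.

Lemma Delta_decomp (a : HP) :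
  tens_eq (Delta a) (tens_scale a.1 [:: (one, one)] ++ Delta (inj a.2)).
Proof.
apply: teqI => U f hf.
rewrite {1}(Hp_decomp a) (PhiD_lin hf) (PhiD_unit hf) Phi_cat.
by rewrite /Phi /tens_scale /= !big_cons !big_nil !addr0 (blZ hf).
Qed.

Lemma Gscale1 opp (hop : bil opp) (U : lmodType K) (f : HP -> HP -> U) (hf : bil f) c x y v :
  G opp f (c *: x, y) v = c *: G opp f (x, y) v.
Proof. exact: (blZ (Gbil1 hop hf v)). Qed.
Lemma Gscale2 opp (hop : bil opp) (U : lmodType K) (f : HP -> HP -> U) (hf : bil f) c u x y :
  G opp f u (c *: x, y) = c *: G opp f u (x, y).
Proof. exact: (blZ (Gbil2 hop hf u)). Qed.

Lemma Phi_coprod_decomp opp (hop : bil opp) (U : lmodType K) (f : HP -> HP -> U) (hf : bil f)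
   (a b : HP) :
  Phi f (coprod opp (Delta a) (Delta b)) =
  (a.1 * b.1) *: G opp f (one, one) (one, one) +
  a.1 *: \sum_(v <- Delta (inj b.2)) G opp f (one, one) v +
  b.1 *: \sum_(u <- Delta (inj a.2)) G opp f u (one, one) +
  Phi f (coprod opp (Delta (inj a.2)) (Delta (inj b.2))).
Proof.
rewrite (teqP (coprod_resp hop (Delta_decomp a) (Delta_decomp b)) hf) !Phi_coprod.
rewrite /tens_scale /= !big_cons.
rewrite Gscale1 // Gscale2 // scalerA.
under eq_bigr do rewrite Gscale1 //.
rewrite -scaler_sumr.
under [X in _ + _ + X = _]eq_bigr do rewrite big_cons Gscale2 //.
rewrite [X in _ + _ + X = _]big_split /= -scaler_sumr addrA.
by []. Qed.

Lemma eps_sum h : \sum_(p <- Delta (inj h)) (p.1.1 * p.2.1 : K) = 0.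
Proof.
have := congr1 (fun a : HP => a.1) (qb_counit_l HB h).
rewrite /= (lin_sum _ _ lin_fst) /=.
by [].
Qed.

Lemma counit_sum (U : lmodType K) (f : HP -> HP -> U) (hf : bil f) h :
  \sum_(p <- Delta (inj h)) (f p.1 (inj p.2.2) + f (p.2.1 *: inj p.1.2) one) =
  Phi f (Delta (inj h)).
Proof.
have E : forall p : HP * HP, f p.1 (inj p.2.2) + f (p.2.1 *: inj p.1.2) one =
    f p.1 p.2 - (p.1.1 * p.2.1) *: f one one.
  move=> [[a1 a2] [b1 b2]] /=.
  have -> : ((b1, b2) : HP) = b1 *: one + inj b2 by rewrite {1}[(b1, b2)]Hp_decomp.
  rewrite (brD hf) (brZ hf) (blZ hf).
  have -> : f ((a1, a2) : HP) one = a1 *: f one one + f (inj a2) one.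
    by rewrite {1}[(a1, a2)]Hp_decomp (blD hf) (blZ hf).
  by rewrite scalerDr scalerA [b1 * a1]mulrC; apply: acl.
under eq_bigr do rewrite E.
rewrite sumrB /Phi -scaler_suml eps_sum scale0r subr0.
by apply: eq_bigr => -[].
Qed.

Lemma qstar0l b : qstar q prec dot succ 0 b = 0. Proof. exact: (bl0 bqstar). Qed.
Lemma qstar0r a : qstar q prec dot succ a 0 = 0. Proof. exact: (br0 bqstar). Qed.

Lemma starp1l a : starp one a = a.
Proof.
case: a => a1 a2; rewrite /Defs.starp /=; apply: (congr2 pair) => /=.
  by rewrite mul1r.
by rewrite scale1r scaler0 addr0 qstar0l addr0.
Qed.
Lemma starp1r a : starp a one = a.
Proof.
case: a => a1 a2; rewrite /Defs.starp /=; apply: (congr2 pair) => /=.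
  by rewrite mulr1.
by rewrite scaler0 add0r scale1r qstar0r addr0.
Qed.
Lemma starp11 : starp one one = one.
Proof. exact: starp1l. Qed.

Lemma precp1l b : precp prec one b = 0.
Proof. by rewrite /precp /= (bl0 bprec) scaler0 addr0. Qed.
Lemma precp1r a : precp prec a one = a.2.
Proof. by rewrite /precp /= (br0 bprec) scale1r add0r. Qed.
Lemma succp1l b : succp succ one b = b.2.
Proof. by rewrite /succp /= (bl0 bsucc) scale1r add0r. Qed.
Lemma succp1r a : succp succ a one = 0.
Proof. by rewrite /succp /= (br0 bsucc) scaler0 addr0. Qed.
Lemma dotp1l b : dotp dot one b = 0.
Proof. by rewrite /dotp /= (bl0 bdot). Qed.
Lemma dotp1r a : dotp dot a one = 0.
Proof. by rewrite /dotp /= (br0 bdot). Qed.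
Lemma tsuccp1l b : tsuccp one b = b.2.
Proof. by rewrite /tsuccp dotp1l succp1l scaler0 add0r. Qed.
Lemma tsuccp1r a : tsuccp a one = 0.
Proof. by rewrite /tsuccp dotp1r succp1r scaler0 add0r. Qed.

Section GEval.
Variables (U : lmodType K) (f : HP -> HP -> U).
Hypothesis hf : bil f.

Lemma G11 opp : opp one one = 0 -> G opp f (one, one) (one, one) = 0.
Proof. by move=> h; rewrite /G /= h inj0 (br0 hf) scaler0 (bl0 hf) addr0. Qed.

Lemma Gl0 opp (s : tens H) : (forall w, opp one w = 0) ->
  \sum_(v <- s) G opp f (one, one) v = 0.
Proof.
move=> h; apply: big1 => v _.
by rewrite /G /= !h inj0 (br0 hf) scaler0 (bl0 hf) addr0.
Qed.
Lemma Gr0 opp (s : tens H) : (forall w, opp w one = 0) ->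
  \sum_(u <- s) G opp f u (one, one) = 0.
Proof.
move=> h; apply: big1 => v _.
by rewrite /G /= !h inj0 (br0 hf) scaler0 (bl0 hf) addr0.
Qed.
Lemma Gl1 opp h : (forall w, opp one w = w.2) ->
  \sum_(v <- Delta (inj h)) G opp f (one, one) v = Phi f (Delta (inj h)).
Proof.
move=> e; rewrite -(counit_sum hf); apply: eq_bigr => v _.
by rewrite /G /= !e starp1l mul1r.
Qed.
Lemma Gr1 opp h : (forall w, opp w one = w.2) ->
  \sum_(u <- Delta (inj h)) G opp f u (one, one) = Phi f (Delta (inj h)).
Proof.
move=> e; rewrite -(counit_sum hf); apply: eq_bigr => v _.
by rewrite /G /= !e starp1r mulr1.
Qed.
End GEval.

Lemma D_prec (a b : HP) :
  tens_eq (Delta (inj (precp prec a b))) (coprod (precp prec) (Delta a) (Delta b)).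
Proof.
apply: teqI => U f hf; rewrite (Phi_coprod_decomp bprecp hf).
rewrite (G11 hf (precp1l one)) (Gl0 hf _ precp1l) (Gr1 hf _ precp1r).
rewrite -(teqP (qb_prec HB a.2 b.2) hf).
rewrite !scaler0 !add0r /precp (linD lin_inj) (linZ lin_inj) (linD (PhiD_lin hf)).
by rewrite (linZ (PhiD_lin hf)) addrC.
Qed.

Lemma D_succ (a b : HP) :
  tens_eq (Delta (inj (succp succ a b))) (coprod (succp succ) (Delta a) (Delta b)).
Proof.
apply: teqI => U f hf; rewrite (Phi_coprod_decomp bsuccp hf).
rewrite (G11 hf (succp1l one)) (Gl1 hf _ succp1l) (Gr0 hf _ succp1r).
rewrite -(teqP (qb_succ HB a.2 b.2) hf).
rewrite !scaler0 !add0r addr0 /succp (linD lin_inj) (linZ lin_inj) (linD (PhiD_lin hf)).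
by rewrite (linZ (PhiD_lin hf)) addrC.
Qed.

Lemma D_dot (a b : HP) :
  tens_eq (Delta (inj (dotp dot a b))) (coprod (dotp dot) (Delta a) (Delta b)).
Proof.
apply: teqI => U f hf; rewrite (Phi_coprod_decomp bdotp hf).
rewrite (G11 hf (dotp1l one)) (Gl0 hf _ dotp1l) (Gr0 hf _ dotp1r).
rewrite -(teqP (qb_dot HB a.2 b.2) hf).
by rewrite !scaler0 !add0r.
Qed.

Lemma G_tsucc (U : lmodType K) (f : HP -> HP -> U) (hf : bil f) u v :
  G tsuccp f u v = q *: G (dotp dot) f u v + G (succp succ) f u v.
Proof.
rewrite /G /tsuccp (linD lin_inj) (linZ lin_inj) (hf.1 _).
rewrite !(blZ hf) (linD lin_inj (q *: dotp dot u.1 v.1)) (linZ lin_inj) (blD hf) (blZ hf) !scalerDr scalerC.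
by rewrite addrACA.
Qed.

Lemma D_tsucc (a b : HP) :
  tens_eq (Delta (inj (tsuccp a b))) (coprod tsuccp (Delta a) (Delta b)).
Proof.
apply: teqI => U f hf.
rewrite {1}/tsuccp (linD lin_inj) (linZ lin_inj) (linD (PhiD_lin hf)) (linZ (PhiD_lin hf)).
rewrite (teqP (D_dot a b) hf) (teqP (D_succ a b) hf) !Phi_coprod scaler_sumr -big_split.
apply: eq_bigr => u _; rewrite scaler_sumr -big_split; apply: eq_bigr => v _.
by rewrite (G_tsucc hf).
Qed.

Lemma teq_trans (s t u : tens H) : tens_eq s t -> tens_eq t u -> tens_eq s u.
Proof.
move=> h1 h2; apply: teqI => U f hf; by rewrite (teqP h1 hf) (teqP h2 hf).
Qed.

Fixpoint wP (l : seq H) : HP :=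
  if l is y :: l' then inj (precp prec (inj y) (wP l')) else one.
Definition wS (l : seq H) : HP :=
  foldl (fun acc z => inj (tsuccp acc (inj z))) one l.

Lemma wS_rcons l z : wS (rcons l z) = inj (tsuccp (wS l) (inj z)).
Proof. by rewrite /wS foldl_rcons. Qed.

Lemma wP_fst l : (wP l).1 = (size l == 0)%:R.
Proof. by case: l. Qed.
Lemma wS_fst l : (wS l).1 = (size l == 0)%:R.
Proof. by case/lastP: l => [|l z] //; rewrite wS_rcons size_rcons. Qed.

Definition Tl (N : nat) (A B : nat -> HP) : tens H := [seq (A j, B j) | j <- iota 0 N].

Lemma sum_Tl (U : lmodType K) N A B (F : HP * HP -> U) :
  \sum_(v <- Tl N A B) F v = \sum_(0 <= j < N) F (A j, B j).
Proof. by rewrite /Tl big_map /index_iota subn0. Qed.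
Lemma Phi_Tl (U : lmodType K) (f : HP -> HP -> U) N A B :
  Phi f (Tl N A B) = \sum_(0 <= j < N) f (A j) (B j).
Proof. exact: sum_Tl. Qed.

Definition TP (ys : seq H) := Tl (size ys).+1 (fun j => wP (drop j ys)) (fun j => wP (take j ys)).
Definition TS (ys : seq H) := Tl (size ys).+1 (fun j => wS (take j ys)) (fun j => wS (drop j ys)).

Lemma sum_take0 (U : lmodType K) (l : seq H) (F : nat -> U) :
  \sum_(0 <= j < (size l).+1) ((size (take j l) == 0)%:R : K) *: F j = F 0%N.
Proof.
rewrite big_nat_recl // take0 /= scale1r big1_seq ?addr0 // => j /andP [_].
rewrite mem_index_iota => /andP [_ hj].
by rewrite size_takel // scale0r.
Qed.

Lemma sum_dropn (U : lmodType K) (l : seq H) (F : nat -> U) :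
  \sum_(0 <= j < (size l).+1) ((size (drop j l) == 0)%:R : K) *: F j = F (size l).
Proof.
rewrite big_nat_recr //= drop_size /= scale1r big1_seq ?add0r // => j /andP [_].
rewrite mem_index_iota => /andP [_ hj].
by rewrite size_drop subn_eq0 leqNgt hj scale0r.
Qed.

Lemma sum2 (U : lmodType K) (a b : HP * HP) (F : HP * HP -> U) :
  \sum_(u <- [:: a; b]) F u = F a + F b.
Proof. by rewrite !big_cons big_nil addr0. Qed.

Lemma GP1 (U : lmodType K) (f : HP -> HP -> U) (hf : bil f) (X : HP) A B :
  G (precp prec) f (X, one) (A, B) = B.1 *: f (inj (precp prec X A)) one.
Proof.
by rewrite /G /= precp1l inj0 (br0 hf) mul1r (blZ hf) add0r.
Qed.
Lemma GP2 (U : lmodType K) (f : HP -> HP -> U) (hf : bil f) y A B :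
  G (precp prec) f (one, inj y) (A, B) = f A (inj (precp prec (inj y) B)).
Proof.
by rewrite /G /= starp1l mul0r scale0r (bl0 hf) addr0.
Qed.

Definition prim2 (x : H) := [:: (inj x, one); (one, inj x)].

Lemma DP ys : (forall z, z \in ys -> primitive Delta z) -> tens_eq (Delta (wP ys)) (TP ys).
Proof.
elim: ys => [|y l IH] hp; first exact: (qb_unit HB).
have hy : primitive Delta y by apply: hp; rewrite inE eqxx.
have hl : tens_eq (Delta (wP l)) (TP l).
  by apply: IH => z hz; apply: hp; rewrite inE hz orbT.
apply: teq_trans; first exact: D_prec.
apply: teq_trans; first exact: (coprod_resp bprecp hy hl).
apply: teqI => U f hf.
rewrite Phi_coprod sum2 /TP !sum_Tl Phi_Tl.
under eq_bigr do rewrite (GP1 hf) wP_fst.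
under [X in _ + X = _]eq_bigr do rewrite (GP2 hf).
rewrite sum_take0 [RHS]big_nat_recl //.
by rewrite drop0 take0.
Qed.

Lemma GS1 (U : lmodType K) (f : HP -> HP -> U) (hf : bil f) z A B :
  G tsuccp f (A, B) (inj z, one) = B.1 *: f (inj (tsuccp A (inj z))) one.
Proof.
by rewrite /G /= tsuccp1r inj0 (br0 hf) mulr1 (blZ hf) add0r.
Qed.
Lemma GS2 (U : lmodType K) (f : HP -> HP -> U) (hf : bil f) z A B :
  G tsuccp f (A, B) (one, inj z) = f A (inj (tsuccp B (inj z))).
Proof.
by rewrite /G /= starp1r mulr0 scale0r (bl0 hf) addr0.
Qed.

Lemma take_rcons' (l : seq H) z j : (j <= size l)%N -> take j (rcons l z) = take j l.
Proof. by move=> hj; rewrite -cats1 takel_cat. Qed.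

Lemma DS ys : (forall z, z \in ys -> primitive Delta z) -> tens_eq (Delta (wS ys)) (TS ys).
Proof.
elim/last_ind: ys => [|l z IH] hp; first exact: (qb_unit HB).
have hz : primitive Delta z by apply: hp; rewrite mem_rcons inE eqxx.
have hl : tens_eq (Delta (wS l)) (TS l).
  by apply: IH => x hx; apply: hp; rewrite mem_rcons inE hx orbT.
rewrite wS_rcons.
apply: teq_trans; first exact: D_tsucc.
apply: teq_trans; first exact: (coprod_resp btsuccp hl hz).
apply: teqI => U f hf.
rewrite Phi_coprod /TS !sum_Tl Phi_Tl.
under eq_bigr do rewrite sum2 (GS1 hf) (GS2 hf) wS_fst.
rewrite big_split /= sum_dropn take_size size_rcons [RHS]big_nat_recr //=.
rewrite take_oversize ?size_rcons // drop_oversize ?size_rcons // -wS_rcons addrC.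
congr (_ + _); apply: eq_big_nat => j /andP [_ hj].
by rewrite take_rcons' // drop_rcons // wS_rcons.
Qed.

Lemma PA y (b c : HP) :
  precp prec (inj (precp prec (inj y) b)) c = precp prec (inj y) (starp b c).
Proof.
case: b => b1 b2; case: c => c1 c2; rewrite /precp /Defs.starp /=.
have ax : prec (prec y b2) c2 = prec y (qstar q prec dot succ b2 c2).
  by rewrite (qt_ax1 HT) /qstar addrAC.
set Q := qstar q prec dot succ b2 c2.
rewrite (blD bprec) ax (blZ bprec) !(brD bprec) !(brZ bprec) scalerDr scalerA.
rewrite [c1 * b1]mulrC !addrA; congr (_ + _).
by rewrite ac3 !addrA.
Qed.
Lemma btsucc : bil (tsucc q dot succ).
Proof. rewrite /tsucc; apply: bil_add; [exact: bil_scale bdot | exact: bsucc]. Qed.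

Lemma tsuccpE (u v : HP) : tsuccp u v = tsucc q dot succ u.2 v.2 + u.1 *: v.2.
Proof. by rewrite /tsuccp /tsucc /dotp /succp addrA. Qed.

Lemma TA_H x y z :
  tsucc q dot succ (qstar q prec dot succ x y) z = tsucc q dot succ x (tsucc q dot succ y z).
Proof.
rewrite /tsucc /qstar.
have e3 : succ (prec x y + q *: dot x y + succ x y) z = succ x (succ y z).
  by rewrite -(qt_ax3 HT) addrAC.
rewrite e3 !(blD bdot) (blZ bdot) (qt_ax6 HT) (qt_ax4 HT) (qt_ax5 HT).
rewrite !(brD bdot) !(brZ bdot) !(brD bsucc) !(brZ bsucc) !scalerDr.
rewrite !addrA; congr (_ + _); congr (_ + _).
by rewrite addrC.
Qed.

Lemma TA (a b : HP) c :
  tsuccp a (inj (tsuccp b (inj c))) = tsuccp (starp a b) (inj c).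
Proof.
case: a => a1 a2; case: b => b1 b2; rewrite !tsuccpE /Defs.starp /=.
rewrite (brD btsucc) (brZ btsucc) (blD btsucc (a1 *: b2 + b1 *: a2)) (blD btsucc (a1 *: b2)) (blZ btsucc a1) (blZ btsucc b1) TA_H (scalerDr a1) scalerA.
rewrite addrA; congr (_ + _).
by rewrite addrC [X in _ + X]addrC addrA.
Qed.

Lemma starp_split (a b : HP) : starp a b = ((a.1 * b.1 : K^o), precp prec a b + tsuccp a b).
Proof.
case: a => a1 a2; case: b => b1 b2; rewrite /Defs.starp /precp /tsuccp /dotp /succp /qstar /=.
congr pair.
by rewrite [LHS](AC (2*3) ((3*2)*(4*(5*1)))).
Qed.

Definition Sfun (a : seq H) : HP :=
  \sum_(0 <= l < (size a).+1) (-1) ^+ (size a - l) *: starp (wP (take l a)) (wS (drop l a)).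
Definition Ppart (a : seq H) : H :=
  \sum_(0 <= l < (size a).+1) (-1) ^+ (size a - l) *: precp prec (wP (take l a)) (wS (drop l a)).
Definition Tpart (a : seq H) : H :=
  \sum_(0 <= l < (size a).+1) (-1) ^+ (size a - l) *: tsuccp (wP (take l a)) (wS (drop l a)).

Lemma Sfun_nil : Sfun [::] = one.
Proof. by rewrite /Sfun big_nat1 /= expr0 scale1r starp11. Qed.

Lemma Sfun_snd a : (Sfun a).2 = Ppart a + Tpart a.
Proof.
rewrite /Sfun (lin_sum _ _ lin_snd) /Ppart /Tpart -big_split.
apply: eq_bigr => l _; by rewrite starp_split /= scalerDr.
Qed.

Lemma Sfun_fst a : (0 < size a)%N -> (Sfun a).1 = 0.
Proof.
move=> ha; rewrite /Sfun (lin_sum _ _ lin_fst).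
transitivity (\sum_(0 <= l < (size a).+1) ((size (take l a) == 0)%:R : K) *:
    ((-1) ^+ (size a - l) * (wS (drop l a)).1 : K^o)).
  apply: eq_bigr => l _; rewrite starp_split /= wP_fst.
  by rewrite !scK mulrCA.
by rewrite sum_take0 /= drop0 wS_fst; case: (size a) ha => // n _; rewrite mulr0.
Qed.

Lemma Ppart_cons y a : Ppart (y :: a) = precp prec (inj y) (Sfun a).
Proof.
rewrite /Ppart /Sfun big_nat_recl //= precp1l scaler0 add0r.
rewrite (br_sum bprecp); apply: eq_bigr => l _.
by rewrite subSS (brZ bprecp) PA.
Qed.

Lemma Tpart_rcons a z : Tpart (rcons a z) = - tsuccp (Sfun a) (inj z).
Proof.
rewrite /Tpart /Sfun size_rcons big_nat_recr //= drop_oversize ?size_rcons //.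
rewrite tsuccp1r scaler0 addr0 (bl_sum btsuccp) -sumrN.
apply: eq_big_nat => l /andP [_ hl].
rewrite take_rcons' // drop_rcons // wS_rcons TA subSn // exprS (blZ btsuccp).
by rewrite mulN1r scaleNr.
Qed.

Lemma Sfun0_aux n a : size a = n.+1 -> Sfun a = 0.
Proof.
elim: n a => [|n IH] a ea.
all: have ha : (0 < size a)%N by rewrite ea.
all: suff h2 : (Sfun a).2 = 0 by move: (Sfun_fst ha) h2; case: (Sfun a) => /= u v -> ->.
all: case: a ea ha => [//|y a1] /= [ea] _.
all: have [a2 [z e]] : exists a2 z, y :: a1 = rcons a2 z :=
       ex_intro _ _ (ex_intro _ _ (lastI y a1)).
all: have ea2 : size a2 = size a1 by move: (congr1 size e); rewrite size_rcons /= => -[].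
all: rewrite Sfun_snd Ppart_cons e Tpart_rcons.
  have a1n : a1 = [::] by apply: size0nil.
  have a2n : a2 = [::] by apply: size0nil; rewrite ea2.
  move: e; rewrite a1n a2n /= => -[->].
  by rewrite Sfun_nil precp1r tsuccp1l subrr.
by rewrite !IH ?(br0 bprecp) ?(bl0 btsuccp) ?oppr0 ?addr0 // ea2.
Qed.

Lemma Sfun0 a : (0 < size a)%N -> Sfun a = 0.
Proof. by case: a => // y a _; apply: (Sfun0_aux (n := size a)). Qed.
Lemma GP3 (U : lmodType K) (f : HP -> HP -> U) (hf : bil f) (A1 : HP) w A B :
  G (precp prec) f (A1, inj w) (A, B) = f (starp A1 A) (inj (precp prec (inj w) B)).
Proof. by rewrite /G /= mul0r scale0r (bl0 hf) addr0. Qed.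

Definition Lx (x : H) (l : seq H) : HP := inj (tsuccp (wP l) (inj x)).

Lemma DC x Y : primitive Delta x -> (forall z, z \in Y -> primitive Delta z) ->
  tens_eq (Delta (Lx x Y))
    ((Lx x Y, one) :: Tl (size Y).+1 (fun j => wP (drop j Y)) (fun j => Lx x (take j Y))).
Proof.
move=> hx hY.
apply: teq_trans; first exact: D_tsucc.
apply: teq_trans; first exact: (coprod_resp btsuccp (DP hY) hx).
apply: teqI => U f hf.
rewrite Phi_coprod /TP sum_Tl Phi_cons Phi_Tl /=.
under eq_bigr do rewrite sum2 (GS1 hf) (GS2 hf) wP_fst.
by rewrite big_split /= sum_take0 drop0.
Qed.

Definition bhp (x : H) (ys : seq H) (i : nat) : HP :=
  inj (precp prec (Lx x (take i ys)) (wS (drop i ys))).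

Lemma Dbrace (U : lmodType K) (f : HP -> HP -> U) (hf : bil f) x ys i :
  primitive Delta x -> (forall z, z \in ys -> primitive Delta z) -> (i <= size ys)%N ->
  Phi f (Delta (bhp x ys i)) = f (bhp x ys i) one +
    \sum_(0 <= j < i.+1) \sum_(0 <= k < (size ys - i).+1)
      f (starp (wP (drop j (take i ys))) (wS (take k (drop i ys))))
        (inj (precp prec (Lx x (take j (take i ys))) (wS (drop k (drop i ys))))).
Proof.
move=> hx hys hi.
have hY : forall z, z \in take i ys -> primitive Delta z.
  by move=> z hz; apply: hys; apply: mem_take hz.
have hD : forall z, z \in drop i ys -> primitive Delta z.
  by move=> z hz; apply: hys; apply: mem_drop hz.
rewrite /bhp (teqP (D_prec _ _) hf).
rewrite (teqP (coprod_resp bprecp (DC hx hY) (DS hD)) hf).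
rewrite Phi_coprod big_cons /TS !sum_Tl.
under eq_bigr do rewrite (GP1 hf) wS_fst.
rewrite sum_dropn take_size (size_takel hi).
congr (_ + _); apply: eq_bigr => j _; rewrite sum_Tl size_drop; apply: eq_bigr => k _.
by rewrite /Lx (GP3 hf).
Qed.

Lemma wP_cons y l : wP (y :: l) = inj (wprec prec y l).
Proof.
elim: l y => [|z l IH] y /=; first by rewrite precp1r.
by rewrite -/(wP (z :: l)) IH /precp /= scale0r addr0.
Qed.

Lemma wS_cons z r : wS (z :: r) = inj (wsucc q dot succ z r).
Proof.
rewrite /wS /= tsuccp1l /wsucc.
elim: r z => [|w r IH] z //=.
by rewrite -IH tsuccpE /= scale0r addr0.
Qed.

Lemma brace_eq x ys i : inj (brace_term q prec dot succ x ys i) = bhp x ys i.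
Proof.
rewrite /brace_term /bhp /Lx.
set l := take i ys; set r := drop i ys.
have -> : (if l is y :: l' then tsucc q dot succ (wprec prec y l') x else x) =
          tsuccp (wP l) (inj x).
  case: l => [|y l'] /=; first by rewrite tsuccp1l.
  by rewrite -/(wP (y :: l')) wP_cons tsuccpE /= scale0r addr0.
case: r => [|z r'] /=; first by rewrite precp1r.
by rewrite -/(wS (z :: r')) wS_cons /precp /= scale0r addr0.
Qed.

Lemma Key (zs : seq H) (j m : nat) : (m <= size zs)%N ->
  \sum_(0 <= i < (size zs).+1)
     (if (j <= i)%N && (i <= m)%N then
        (-1) ^+ (size zs - i) *: starp (wP (drop j (take i zs))) (wS (drop i (take m zs)))
      else 0)
  = if j == m then (-1) ^+ (size zs - j) *: one else 0.
Proof.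
move=> hm; set n := size zs.
set F := fun i => (-1) ^+ (n - i) *: starp (wP (drop j (take i zs))) (wS (drop i (take m zs))).
case: (leqP j m) => hjm; last first.
  rewrite big1 => [|i _]; last first.
    case: ifP => // /andP [h1 h2]; exfalso.
    by move: (leq_ltn_trans (leq_trans h1 h2) hjm); rewrite ltnn.
  by rewrite eq_sym ltn_eqF.
have hjN : (j <= n.+1)%N by apply: leqW; apply: leq_trans hjm hm.
rewrite (@big_cat_nat _ _ _ j 0 n.+1) //= [X in X + _]big1_seq ?add0r; last first.
  move=> i /andP [_]; rewrite mem_index_iota => /andP [_ hi].
  by rewrite leqNgt hi.
have hmN : (m.+1 <= n.+1)%N by [].
rewrite (@big_cat_nat _ _ _ m.+1 j n.+1) ?(leqW hjm) //= [X in _ + X]big1_seq ?addr0; last first.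
  move=> i /andP [_]; rewrite mem_index_iota => /andP [hi _].
  by rewrite [(i <= m)%N]leqNgt hi andbF.
rewrite (eq_big_nat _ _ (F2 := F)); last first.
  by move=> i /andP [h1 h2]; rewrite h1 -ltnS h2.
have E := big_addn 0 m.+1 j (fun _ => true) F; rewrite add0n in E; rewrite E {E}.
set a := drop j (take m zs).
have sa : size a = (m - j)%N by rewrite /a size_drop size_takel.
have -> : (m.+1 - j)%N = (size a).+1 by rewrite sa subSn.
transitivity ((-1) ^+ (n - m) *: Sfun a).
  rewrite /Sfun scaler_sumr; apply: eq_big_nat => l /andP [_ hl].
  rewrite /F scalerA -exprD.
  have hlj : (l + j <= m)%N.
    move: hl hjm; rewrite ltnS sa => /leP hl /leP hjm'; apply/leP.
    rewrite -!minusE -!plusE in hl *; lia.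
  have -> : (n - (l + j))%N = (n - m + (size a - l))%N.
    rewrite sa; move: hlj hm => /leP h1 /leP h2.
    rewrite -!minusE -!plusE in h1 *; lia.
  congr (_ *: starp _ _).
    by rewrite /a take_drop take_takel.
  by rewrite /a drop_drop.
case: (ltngtP j m) hjm => // [hlt|heq] _.
  by rewrite Sfun0 ?scaler0 // sa subn_gt0.
have -> : a = [::] by apply: size0nil; rewrite sa heq subnn.
by rewrite Sfun_nil heq.
Qed.

Lemma sum_from (U : lmodType K) (a b : nat) (F : nat -> U) : (a <= b)%N ->
  \sum_(a <= m < b) F m = \sum_(0 <= m < b) (if (a <= m)%N then F m else 0).
Proof.
move=> hab; rewrite [RHS](@big_cat_nat _ _ _ a 0 b) //= [X in _ = X + _]big1_seq ?add0r; last first.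
  move=> i /andP [_]; rewrite mem_index_iota => /andP [_ hi].
  by rewrite leqNgt hi.
by apply: eq_big_nat => i /andP [-> _].
Qed.

Lemma sum_upto (U : lmodType K) (c b : nat) (F : nat -> U) : (c <= b)%N ->
  \sum_(0 <= m < c) F m = \sum_(0 <= m < b) (if (m < c)%N then F m else 0).
Proof.
move=> hcb; rewrite [RHS](@big_cat_nat _ _ _ c 0 b) //= [X in _ = _ + X]big1_seq ?addr0; last first.
  move=> i /andP [_]; rewrite mem_index_iota => /andP [hi _].
  by rewrite ltnNge hi.
by apply: eq_big_nat => i /andP [_ ->].
Qed.

Section Final.
Variables (x : H) (zs : seq H).
Hypothesis hx : primitive Delta x.
Hypothesis hzs : forall z, z \in zs -> primitive Delta z.
Variables (U : lmodType K) (f : HP -> HP -> U).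
Hypothesis hf : bil f.

Local Notation n := (size zs).
Definition Xf (i j m : nat) : HP := starp (wP (drop j (take i zs))) (wS (drop i (take m zs))).
Definition Rf (j m : nat) : HP := inj (precp prec (Lx x (take j zs)) (wS (drop m zs))).

Lemma T_eq i : (i <= n)%N ->
  \sum_(0 <= j < i.+1) \sum_(0 <= k < (n - i).+1)
      f (starp (wP (drop j (take i zs))) (wS (take k (drop i zs))))
        (inj (precp prec (Lx x (take j (take i zs))) (wS (drop k (drop i zs)))))
  = \sum_(0 <= j < n.+1) \sum_(0 <= m < n.+1)
      (if (j <= i)%N && (i <= m)%N then f (Xf i j m) (Rf j m) else 0).
Proof.
move=> hi; rewrite (sum_upto _ (b := n.+1)) //; apply: eq_bigr => j _.
case: ifP => hj; last first.
  by rewrite ltnS in hj; rewrite big1 // => m _; rewrite hj.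
rewrite ltnS in hj; rewrite hj /=.
have E := big_addn 0 n.+1 i (fun _ => true) (fun m => f (Xf i j m) (Rf j m)).
rewrite add0n subSn // in E.
rewrite -(@sum_from U i n.+1 (fun m => f (Xf i j m) (Rf j m)) (leqW hi)) E.
apply: eq_bigr => k _.
by rewrite /Xf /Rf take_drop drop_drop take_takel.
Qed.
Lemma EM : inj (M1n q prec dot succ x zs) =
  \sum_(0 <= i < n.+1) ((-1) ^+ (n - i) : K) *: bhp x zs i.
Proof.
rewrite /M1n (lin_sum _ _ lin_inj) big_mkord; apply: eq_bigr => i _.
by rewrite (linZ lin_inj) brace_eq.
Qed.

Lemma M1n_Phi : Phi f (Delta (inj (M1n q prec dot succ x zs))) =
  f (inj (M1n q prec dot succ x zs)) one + f one (inj (M1n q prec dot succ x zs)).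
Proof.
rewrite EM (lin_sum _ _ (PhiD_lin hf)) (bl_sum hf) (br_sum hf).
rewrite (eq_big_nat _ _ (F2 := fun i => ((-1) ^+ (n - i) : K) *: (f (bhp x zs i) one +
    \sum_(0 <= j < n.+1) \sum_(0 <= m < n.+1)
      (if (j <= i)%N && (i <= m)%N then f (Xf i j m) (Rf j m) else 0)))); last first.
  move=> i /andP [_ hi]; rewrite ltnS in hi.
  by rewrite (linZ (PhiD_lin hf)) (Dbrace hf hx hzs hi) T_eq.
under eq_bigr do rewrite scalerDr.
rewrite big_split /=; congr (_ + _).
  by apply: eq_bigr => i _; rewrite (blZ hf).
transitivity (\sum_(0 <= i < n.+1) \sum_(0 <= j < n.+1) \sum_(0 <= m < n.+1)
   (if (j <= i)%N && (i <= m)%N then ((-1) ^+ (n - i) : K) *: f (Xf i j m) (Rf j m) else 0)).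
  apply: eq_bigr => i _; rewrite scaler_sumr; apply: eq_bigr => j _.
  rewrite scaler_sumr; apply: eq_bigr => m _.
  by case: ifP; rewrite ?scaler0.
rewrite exchange_big_nat; under eq_bigr do rewrite exchange_big_nat.
transitivity (\sum_(0 <= j < n.+1) \sum_(0 <= m < n.+1)
   f (if j == m then ((-1) ^+ (n - j) : K) *: one else 0) (Rf j m)).
  apply: eq_bigr => j _; apply: eq_big_nat => m /andP [_ hm]; rewrite ltnS in hm.
  rewrite -(Key j hm) (bl_sum hf); apply: eq_bigr => i _.
  by case: ifP => _; [rewrite (blZ hf) | rewrite (bl0 hf)].
apply: eq_big_nat => j /andP [_ hj].
transitivity (\sum_(0 <= m < n.+1)
   (if m == j then ((-1) ^+ (n - j) : K) *: f one (Rf j m) else 0)).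
  apply: eq_bigr => m _; rewrite eq_sym.
  by case: eqP => [->|_]; [rewrite (blZ hf) | rewrite (bl0 hf)].
by rewrite -big_mkcond big_nat1_eq hj (brZ hf).
Qed.
End Final.

Lemma M1n_prim x zs : primitive Delta x -> (forall z, z \in zs -> primitive Delta z) ->
  primitive Delta (M1n q prec dot succ x zs).
Proof.
move=> hx hzs; apply: teqI => U f hf.
by rewrite (M1n_Phi hx hzs hf) !Phi_cons Phi_nil addr0.
Qed.

Lemma dot_prim x y : primitive Delta x -> primitive Delta y -> primitive Delta (dot x y).
Proof.
move=> hx hy; apply: teqI => U f hf.
rewrite (teqP (qb_dot HB x y) hf) (teqP (coprod_resp bdotp hx hy) hf).
rewrite Phi_coprod !sum2 /G /= !dotp1l !dotp1r starp11 !inj0 !(br0 hf).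
rewrite !scaler0 !(bl0 hf) mul1r scale1r !Phi_cons Phi_nil.
by rewrite !add0r !addr0.
Qed.

Lemma prim0 : primitive Delta 0.
Proof.
apply: teqI => U f hf.
by rewrite inj0 (lin0 (PhiD_lin hf)) !Phi_cons Phi_nil (bl0 hf) (br0 hf) !addr0.
Qed.

Lemma prim_lin c u v : primitive Delta u -> primitive Delta v -> primitive Delta (c *: u + v).
Proof.
move=> hu hv; apply: teqI => U f hf.
rewrite lin_inj (PhiD_lin hf) (PhiD_prim hf hu) (PhiD_prim hf hv) !Phi_cons Phi_nil addr0 /=.
rewrite (blD hf) (blZ hf) (brD hf) (brZ hf) scalerDr.
by rewrite addrACA.
Qed.

End Main.

Theorem lemma2p3 (K : fieldType) (H : lmodType K) (q : K)
    (prec dot succ : H -> H -> H) (Delta : Hp H -> tens H) :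
  qtridendriform q prec dot succ ->
  qtri_bialgebra q prec dot succ Delta ->
  (* M_{1n}(x; z_1..z_n) and x . y are primitive for primitive x, y, z_i *)
  (forall (x : H) (zs : seq H),
      primitive Delta x -> (forall z, z \in zs -> primitive Delta z) ->
      primitive Delta (M1n q prec dot succ x zs)) /\
  (forall x y : H, primitive Delta x -> primitive Delta y ->
      primitive Delta (dot x y)) /\
  (* hence Prim(H) is a subspace closed under all M_{1n} and . *)
  (primitive Delta 0 /\
   forall (c : K) (u v : H), primitive Delta u -> primitive Delta v ->
      primitive Delta (c *: u + v)).
Proof.
move=> HT HB; split; first exact: (M1n_prim HT HB).
split; first exact: (dot_prim HT HB).
split; first exact: (prim0 HB).
exact: (prim_lin HB).
Qed.
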